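(* Let $\mathbb{F}$ be an algebraically closed field. Let $A_1,\dots,A_4,B_1,\dots,B_4\in M(2)$ satisfy the Standing Hypothesis, and suppose $A_1=\begin{pmatrix}a_1&1\\0&a_1\end{pmatrix}$ and $B_1=\begin{pmatrix}b_1&0\\0&b_4\end{pmatrix}$ for some $a_1,b_1,b_4\in\mathbb{F}$. Then $\mathrm{tr}(A_1A_2A_3A_4)=\mathrm{tr}(B_1B_2B_3B_4)$.
   Context: $M(2)$ is the space of $2\times 2$ matrices over $\mathbb{F}$. Standing Hypothesis: $\mathrm{tr}(A_i)=\mathrm{tr}(B_i)$ and $\det(A_i)=\det(B_i)$ for $1\le i\le 4$; $\mathrm{tr}(A_iA_j)=\mathrm{tr}(B_iB_j)$ for $1\le i<j\le 4$; $\mathrm{tr}(A_iA_jA_k)=\mathrm{tr}(B_iB_jB_k)$ for $1\le i<j<k\le 4$. *)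

(* Defs.v *)
From HB Require Import structures.
From mathcomp Require Import all_boot all_order all_algebra.
Set Implicit Arguments. Unset Strict Implicit. Unset Printing Implicit Defensive.
Import GRing.Theory.
Local Open Scope ring_scope.

(* Standing Hypothesis for 4-tuples of 2x2 matrices (indices 1..4 as 'I_4). *)
Definition standing_hyp (F : fieldType) (A B : 'I_4 -> 'M[F]_2) : Prop :=
  (forall i, \tr (A i) = \tr (B i) /\ \det (A i) = \det (B i)) /\
  (forall i j : 'I_4, (i < j)%N -> \tr (A i * A j) = \tr (B i * B j)) /\
  (forall i j k : 'I_4, (i < j)%N -> (j < k)%N ->
     \tr (A i * A j * A k) = \tr (B i * B j * B k)).

Definition mx2 (F : fieldType) (a b c d : F) : 'M[F]_2 :=
  \matrix_(i < 2, j < 2)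
    if (i == 0 :> nat) then (if (j == 0 :> nat) then a else b)
    else (if (j == 0 :> nat) then c else d).

(* Main.v *)
Require Import Defs.
From HB Require Import structures.
From mathcomp Require Import all_boot all_order all_algebra.
From mathcomp Require Import ring.
Import GRing.Theory.
Local Open Scope ring_scope.

Section S.
Variable F : fieldType.
Lemma l1 : lift ord0 ord0 = 1 :> 'I_2. Proof. exact/val_inj. Qed.
Lemma l0 : ord0 = 0 :> 'I_2. Proof. exact/val_inj. Qed.
Lemma trE2 (M : 'M[F]_2) : \tr M = M 0 0 + M 1 1.
Proof. by rewrite /mxtrace !big_ord_recl big_ord0 addr0 l1 l0. Qed.
Lemma mulE2 (X Y : 'M[F]_2) i j : (X * Y) i j = X i 0 * Y 0 j + X i 1 * Y 1 j.
Proof. by rewrite -mulmxE mxE !big_ord_recl big_ord0 addr0 l1 l0. Qed.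
Lemma mx2E (a b c d : F) : let M := mx2 a b c d in
  [/\ M 0 0 = a, M 0 1 = b, M 1 0 = c & M 1 1 = d].
Proof. by rewrite /mx2 !mxE. Qed.
End S.
Lemma detE2 (F : fieldType) (M : 'M[F]_2) : \det M = M 0 0 * M 1 1 - M 0 1 * M 1 0.
Proof.
rewrite (expand_det_row _ 0) !big_ord_recl big_ord0 addr0 /cofactor !det_mx11 !mxE /=.
have -> : lift (0 : 'I_2) (0 : 'I_1) = 1 by exact/val_inj.
have -> : lift (1 : 'I_2) (0 : 'I_1) = 0 by exact/val_inj.
rewrite l0 /= expr0 expr1 !mul1r mulN1r. by rewrite mulrN.
Qed.
Lemma trA (F : fieldType) (a : F) M : \tr (mx2 a 1 0 a * M) = a * \tr M + M 1 0.
Proof. rewrite !trE2 !mulE2; have [-> -> -> ->] := mx2E F a 1 0 a. ring. Qed.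
Lemma trB (F : fieldType) (a : F) M : \tr (mx2 a 0 0 a * M) = a * \tr M.
Proof. rewrite !trE2 !mulE2; have [-> -> -> ->] := mx2E F a 0 0 a. ring. Qed.
Lemma lowmul (F : fieldType) (X Y : 'M[F]_2) : X 1 0 = 0 -> Y 1 0 = 0 -> (X*Y) 1 0 = 0.
Proof. by move=> hx hy; rewrite mulE2 hx hy mul0r mulr0 addr0. Qed.

Theorem lemma6 (F : closedFieldType) (A B : 'I_4 -> 'M[F]_2) (a1 b1 b4 : F) :
  standing_hyp A B ->
  A (@Ordinal 4 0 isT) = mx2 a1 1 0 a1 ->
  B (@Ordinal 4 0 isT) = mx2 b1 0 0 b4 ->
  \tr (A (@Ordinal 4 0 isT) * A (@Ordinal 4 1 isT) * A (@Ordinal 4 2 isT) * A (@Ordinal 4 3 isT))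
  = \tr (B (@Ordinal 4 0 isT) * B (@Ordinal 4 1 isT) * B (@Ordinal 4 2 isT) * B (@Ordinal 4 3 isT)).
Proof.
move=> [H1 [H2 H3]] hA hB.
have [ht hd] := H1 (@Ordinal 4 0 isT).
rewrite hA hB !trE2 !detE2 in ht hd.
have [e1 e2 e3 e4] := mx2E F a1 1 0 a1; rewrite e1 e2 e3 e4 in ht hd.
have [f1 f2 f3 f4] := mx2E F b1 0 0 b4; rewrite f1 f2 f3 f4 in ht hd.
have e14 : b4 = b1.
  suff: (b4 - b1) ^+ 2 = 0 by move/eqP; rewrite expf_eq0 /= subr_eq0 => /eqP.
  have -> : (b4 - b1) ^+ 2 = (b1 + b4)^+2 - 4%:R * (b1 * b4 - 0 * 0) by ring.
  rewrite -ht -hd; ring.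
subst b4.
have eb : b1 = a1.
  suff: (b1 - a1) ^+ 2 = 0 by move/eqP; rewrite expf_eq0 /= subr_eq0 => /eqP.
  have -> : (b1 - a1) ^+ 2 = (b1 * b1 - 0 * 0) - a1 * (b1 + b1) + a1 * a1 by ring.
  rewrite -ht -hd; ring.
subst b1.
have low : forall j : 'I_4, (0 < j)%N -> A j 1 0 = 0.
  move=> j hj; have := H2 (@Ordinal 4 0 isT) j hj.
  rewrite hA hB trA trB; have [-> _] := H1 j.
  by move/eqP; rewrite -subr_eq0 addrAC subrr add0r => /eqP.
rewrite -!mulrA hA hB trA trB lowmul ?low //; last by apply: lowmul; rewrite low.
rewrite addr0 !mulrA (H3 (@Ordinal 4 1 isT) (@Ordinal 4 2 isT) (@Ordinal 4 3 isT) isT isT) //.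
Qed.
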